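(* Let $n\geq 1$. The map $\rho_1\mapsto x_1$, $\rho_2\mapsto x_nx_1$, $\rho_3\mapsto x_{n-1}x_nx_1$, $\dots$, $\rho_n\mapsto x_2x_3\cdots x_nx_1$ (i.e. $\rho_k\mapsto x_{n-k+2}x_{n-k+3}\cdots x_nx_1$) extends to a group isomorphism from the group $\langle\rho_1,\dots,\rho_n\mid\rho_1\rho_n\rho_i=\rho_{i+1}\rho_n,\ 1\leq i\leq n-1\rangle$ onto the group $$\langle x_1,\dots,x_n\mid x_1x_2\cdots x_nx_1=x_2x_3\cdots x_nx_1x_2=\cdots=x_nx_1x_2\cdots x_n\rangle$$ (where each word in the chain of equalities is the product of $n+1$ consecutive generators taken cyclically, starting at $x_1$, $x_2$, ..., $x_n$ respectively), with inverse given by $x_1\mapsto\rho_1$, $x_n\mapsto\rho_2\rho_1^{-1}$, $x_{n-1}\mapsto\rho_3\rho_2^{-1}$, $\dots$, $x_2\mapsto\rho_n\rho_{n-1}^{-1}$. *)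

(* Defs.v *)
(* Finitely presented groups, encoded as words in the free group
   modulo the congruence generated by free cancellation and the relations. *)
From Stdlib Require Import List Arith Lia.
Import ListNotations.

(* A letter (i, false) is the generator g_i, (i, true) is its inverse g_i^-1. *)
Definition letter := (nat * bool)%type.
Definition word := list letter.

Definition inv_letter (a : letter) : letter := (fst a, negb (snd a)).
Definition inv_word (w : word) : word := rev (map inv_letter w).

(* A relation (l, r) means l = r in the presented group. *)
Definition relations := list (word * word).

Inductive geq (R : relations) : word -> word -> Prop :=
| geq_refl : forall w, geq R w w
| geq_sym : forall u v, geq R u v -> geq R v u
| geq_trans : forall u v w, geq R u v -> geq R v w -> geq R u w
| geq_free : forall u v a, geq R (u ++ a :: inv_letter a :: v) (u ++ v)
| geq_rel : forall u v l r, In (l, r) R -> geq R (u ++ l ++ v) (u ++ r ++ v).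

Definition valid (n : nat) (w : word) : Prop :=
  Forall (fun a : letter => 1 <= fst a <= n) w.

Definition subst (f : nat -> word) (w : word) : word :=
  flat_map (fun a : letter => if snd a then inv_word (f (fst a)) else f (fst a)) w.

Definition gen (i : nat) : letter := (i, false).
Definition gen_inv (i : nat) : letter := (i, true).

Definition rho_rels (n : nat) : relations :=
  map (fun i => ([gen 1; gen n; gen i], [gen (i + 1); gen n])) (seq 1 (n - 1)).

(* The word x_j x_{j+1} ... x_n x_1 ... x_j : n+1 consecutive generators taken
   cyclically, starting at x_j (1 <= j <= n). *)
Definition cyc_word (n j : nat) : word :=
  map (fun k => gen (((j - 1 + k) mod n) + 1)) (seq 0 (n + 1)).

(* Relations of < x_1..x_n | x_1...x_n x_1 = x_2...x_n x_1 x_2 = ... = x_n x_1...x_n >,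
   the chain of equalities expressed as W_1 = W_j for 2 <= j <= n. *)
Definition x_rels (n : nat) : relations :=
  map (fun j => (cyc_word n 1, cyc_word n j)) (seq 2 (n - 1)).

Definition phi_gen (n k : nat) : word :=
  map gen (seq (n - k + 2) (k - 1)) ++ [gen 1].

Definition psi_gen (n j : nat) : word :=
  if j =? 1 then [gen 1] else [gen (n - j + 2); gen_inv (n - j + 1)].

(* Main.v *)
Require Import Defs.
From Stdlib Require Import List Arith Lia.
Import ListNotations.

Lemma geq_app_l R u v a : geq R u v -> geq R (a ++ u) (a ++ v).
Proof.
  induction 1.
  - apply geq_refl.
  - apply geq_sym; auto.
  - eapply geq_trans; eauto.
  - rewrite !(app_assoc a u). apply geq_free.
  - rewrite !(app_assoc a u). apply geq_rel; auto.
Qed.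

Lemma geq_app_r R u v b : geq R u v -> geq R (u ++ b) (v ++ b).
Proof.
  induction 1.
  - apply geq_refl.
  - apply geq_sym; auto.
  - eapply geq_trans; eauto.
  - rewrite <- !app_assoc. simpl. apply geq_free.
  - rewrite <- !app_assoc. apply geq_rel; auto.
Qed.

Lemma geq_app2 R u u' v v' : geq R u u' -> geq R v v' -> geq R (u ++ v) (u' ++ v').
Proof.
  intros H1 H2. eapply geq_trans. apply geq_app_r; eauto. apply geq_app_l; auto.
Qed.

Lemma inv_letter_inv a : inv_letter (inv_letter a) = a.
Proof. destruct a as [i b]; unfold inv_letter; simpl; rewrite Bool.negb_involutive; reflexivity. Qed.

Lemma inv_word_cons a w : inv_word (a :: w) = inv_word w ++ [inv_letter a].
Proof. reflexivity. Qed.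

Lemma inv_word_app u v : inv_word (u ++ v) = inv_word v ++ inv_word u.
Proof. unfold inv_word; rewrite map_app, rev_app_distr; reflexivity. Qed.

Lemma inv_word_inv w : inv_word (inv_word w) = w.
Proof.
  induction w as [|a w IH]; [reflexivity|].
  rewrite inv_word_cons, inv_word_app, IH. simpl. rewrite inv_letter_inv. reflexivity.
Qed.

Lemma cancel_r R w : geq R (w ++ inv_word w) [].
Proof.
  induction w as [|a w IH]; [apply geq_refl|].
  rewrite inv_word_cons, app_assoc.
  change (geq R ([a] ++ (w ++ inv_word w) ++ [inv_letter a]) []).
  apply geq_trans with ([a] ++ [] ++ [inv_letter a]).
  apply geq_app_l. apply geq_app_r. exact IH.
  exact (geq_free R [] [] a).
Qed.

Lemma cancel_l R w : geq R (inv_word w ++ w) [].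
Proof. pose proof (cancel_r R (inv_word w)) as H. rewrite inv_word_inv in H. exact H. Qed.

Lemma geq_inv R x y : geq R x y -> geq R (inv_word x) (inv_word y).
Proof.
  intros H.
  eapply geq_trans.
  { apply geq_sym. rewrite <- (app_nil_r (inv_word x)) at 1. apply geq_app_l. apply (cancel_r R y). }
  rewrite app_assoc.
  eapply geq_trans. apply geq_app_r. apply geq_app_l. apply geq_sym. exact H.
  change (geq R ((inv_word x ++ x) ++ inv_word y) ([] ++ inv_word y)).
  apply geq_app_r. apply cancel_l.
Qed.

Lemma subst_app f u v : subst f (u ++ v) = subst f u ++ subst f v.
Proof. unfold subst. apply flat_map_app. Qed.

Lemma subst_inv f w : subst f (inv_word w) = inv_word (subst f w).
Proof.
  induction w as [|[i b] w IH]; [reflexivity|].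
  rewrite inv_word_cons, subst_app, IH.
  change (subst f ((i, b) :: w)) with ((if b then inv_word (f i) else f i) ++ subst f w).
  rewrite inv_word_app. f_equal.
  destruct b; simpl; rewrite app_nil_r; [rewrite inv_word_inv|]; reflexivity.
Qed.

Lemma hom R R' f : (forall l r, In (l, r) R -> geq R' (subst f l) (subst f r)) ->
  forall u v, geq R u v -> geq R' (subst f u) (subst f v).
Proof.
  intros HR u v H. induction H.
  - apply geq_refl.
  - apply geq_sym; auto.
  - eapply geq_trans; eauto.
  - change (a :: inv_letter a :: v) with ([a; inv_letter a] ++ v).
    rewrite !subst_app. apply geq_app_l.
    change (geq R' (subst f [a; inv_letter a] ++ subst f v) ([] ++ subst f v)). apply geq_app_r.
    destruct a as [i [|]]; unfold subst; simpl; rewrite app_nil_r.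
    + apply cancel_l.
    + apply cancel_r.
  - rewrite !subst_app. apply geq_app_l. apply geq_app_r. auto.
Qed.

Lemma comp_id R f g n : (forall i, 1 <= i <= n -> geq R (subst g (f i)) [gen i]) ->
  forall w, valid n w -> geq R (subst g (subst f w)) w.
Proof.
  intros Hf w Hw. induction w as [|[i b] w IH]; [apply geq_refl|].
  inversion Hw; subst.
  change ((i, b) :: w) with ([(i, b)] ++ w). rewrite !subst_app.
  apply geq_app2; [|auto].
  destruct b; unfold subst at 2; simpl; rewrite app_nil_r.
  - rewrite subst_inv. apply (geq_inv R _ [gen i]). auto.
  - auto.
Qed.

Lemma subst_cons_gen f i w : subst f (gen i :: w) = f i ++ subst f w.
Proof. reflexivity. Qed.

Lemma map_seq_shift {A} (f g : nat -> A) len : forall s t,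
  (forall k, k < len -> f (s + k) = g (t + k)) -> map f (seq s len) = map g (seq t len).
Proof.
  induction len as [|len IH]; intros s t H; [reflexivity|].
  simpl. f_equal.
  - rewrite <- (Nat.add_0_r s), <- (Nat.add_0_r t). apply H. lia.
  - apply IH. intros k Hk. replace (S s + k) with (s + S k) by lia.
    replace (S t + k) with (t + S k) by lia. apply H. lia.
Qed.

Lemma seq_app' a b c : seq a (b + c) = seq a b ++ seq (a + b) c.
Proof.
  revert a. induction b as [|b IH]; intros a; simpl.
  - rewrite Nat.add_0_r. reflexivity.
  - rewrite IH. do 3 f_equal. lia.
Qed.

Lemma cyc_split n j : 1 <= j <= n ->
  cyc_word n j = map gen (seq j (n - j + 1)) ++ map gen (seq 1 j).
Proof.
  intros Hj. unfold cyc_word.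
  replace (n + 1) with ((n - j + 1) + j) by lia.
  rewrite seq_app', map_app. f_equal.
  - apply map_seq_shift. intros k Hk. f_equal.
    rewrite Nat.mod_small by lia. lia.
  - apply map_seq_shift. intros k Hk. f_equal.
    replace (j - 1 + (0 + (n - j + 1) + k)) with (k + 1 * n) by lia.
    rewrite Nat.Div0.mod_add, Nat.mod_small by lia. lia.
Qed.

Lemma L n R : forall m a, 2 <= a -> a + m <= n + 1 ->
  geq R (subst (psi_gen n) (map gen (seq a m))) [gen (n + 2 - a); gen_inv (n + 2 - a - m)].
Proof.
  induction m as [|m IH]; intros a Ha Ham.
  - replace (n + 2 - a - 0) with (n + 2 - a) by lia.
    apply geq_sym. exact (geq_free R [] [] (gen (n + 2 - a))).
  - change (map gen (seq a (S m))) with (gen a :: map gen (seq (S a) m)).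
    rewrite subst_cons_gen.
    assert (Hp : psi_gen n a = [gen (n + 2 - a); gen_inv (n + 2 - S a)]).
    { unfold psi_gen. destruct (a =? 1) eqn:E; [apply Nat.eqb_eq in E; lia|].
      f_equal; [f_equal|f_equal; f_equal]; lia. }
    rewrite Hp.
    eapply geq_trans. apply geq_app_l. apply IH; lia.
    replace (n + 2 - a - S m) with (n + 2 - S a - m) by lia.
    exact (geq_free R [gen (n + 2 - a)] [gen_inv (n + 2 - S a - m)] (gen_inv (n + 2 - S a))).
Qed.

Lemma conj3 n : 1 <= n -> forall k, 1 <= k <= n ->
  geq (rho_rels n) (subst (psi_gen n) (phi_gen n k)) [gen k].
Proof.
  intros hn k Hk. unfold phi_gen. rewrite subst_app.
  eapply geq_trans. apply geq_app_r. apply (L n _ (k - 1) (n - k + 2)); lia.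
  replace (n + 2 - (n - k + 2)) with k by lia.
  replace (k - (k - 1)) with 1 by lia.
  exact (geq_free _ [gen k] [] (gen_inv 1)).
Qed.

Lemma conj4 n : 1 <= n -> forall j, 1 <= j <= n ->
  geq (x_rels n) (subst (phi_gen n) (psi_gen n j)) [gen j].
Proof.
  intros hn j Hj. unfold psi_gen. destruct (j =? 1) eqn:E.
  - apply Nat.eqb_eq in E. subst j. apply geq_refl.
  - apply Nat.eqb_neq in E.
    change (subst (phi_gen n) [gen (n - j + 2); gen_inv (n - j + 1)])
      with (phi_gen n (n - j + 2) ++ inv_word (phi_gen n (n - j + 1)) ++ []).
    assert (Hs : phi_gen n (n - j + 2) = gen j :: phi_gen n (n - j + 1)).
    { unfold phi_gen.
      replace (n - (n - j + 2) + 2) with j by lia.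
      replace (n - j + 2 - 1) with (S (n - j)) by lia.
      replace (n - (n - j + 1) + 2) with (S j) by lia.
      replace (n - j + 1 - 1) with (n - j) by lia. reflexivity. }
    rewrite Hs, app_nil_r.
    change (geq (x_rels n) ([gen j] ++ (phi_gen n (n - j + 1) ++ inv_word (phi_gen n (n - j + 1)))) ([gen j] ++ [])).
    apply geq_app_l. apply cancel_r.
Qed.

Lemma subst3 f a b c : subst f [gen a; gen b; gen c] = f a ++ f b ++ f c.
Proof. unfold subst; simpl. rewrite app_nil_r. reflexivity. Qed.
Lemma subst2 f a b : subst f [gen a; gen b] = f a ++ f b.
Proof. unfold subst; simpl. rewrite app_nil_r. reflexivity. Qed.

Lemma rel1 n : 1 <= n -> forall l r, In (l, r) (rho_rels n) ->
  geq (x_rels n) (subst (phi_gen n) l) (subst (phi_gen n) r).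
Proof.
  intros hn l r H. unfold rho_rels in H. apply in_map_iff in H.
  destruct H as [i [Heq Hin]]. apply in_seq in Hin. injection Heq as <- <-.
  rewrite subst3, subst2.
  assert (Hmem : In (cyc_word n 1, cyc_word n (n - i + 1)) (x_rels n)).
  { unfold x_rels. apply in_map_iff. exists (n - i + 1). split; [reflexivity|].
    apply in_seq. lia. }
  assert (E1 : phi_gen n 1 ++ phi_gen n n ++ phi_gen n i = [] ++ cyc_word n 1 ++ phi_gen n i).
  { rewrite cyc_split by lia. simpl. unfold phi_gen.
    rewrite Nat.sub_diag. replace (n - 1 + 1) with n by lia.
    assert (Hs : seq 1 n = 1 :: seq 2 (n - 1)).
    { destruct n; [lia|]. simpl. rewrite Nat.sub_0_r. reflexivity. }
    rewrite Hs. simpl. rewrite <- !app_assoc. reflexivity. }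
  assert (E2 : phi_gen n (i + 1) ++ phi_gen n n = [] ++ cyc_word n (n - i + 1) ++ phi_gen n i).
  { rewrite cyc_split by lia. simpl. unfold phi_gen.
    rewrite Nat.sub_diag. replace (n - (n - i + 1) + 1) with i by lia.
    replace (n - (i + 1) + 2) with (n - i + 1) by lia.
    replace (i + 1 - 1) with i by lia.
    assert (Hs : seq 2 (n - 1) = seq 2 (n - i) ++ seq (n - i + 2) (i - 1)).
    { replace (n - i + 2) with (2 + (n - i)) by lia. rewrite <- seq_app'. f_equal. lia. }
    assert (Hs2 : seq 1 (n - i + 1) = 1 :: seq 2 (n - i)).
    { replace (n - i + 1) with (S (n - i)) by lia. reflexivity. }
    rewrite Hs2. simpl. rewrite Hs, map_app. rewrite <- !app_assoc. reflexivity. }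
  rewrite E1, E2. apply geq_rel. exact Hmem.
Qed.

Lemma rel2 n : 1 <= n -> forall l r, In (l, r) (x_rels n) ->
  geq (rho_rels n) (subst (psi_gen n) l) (subst (psi_gen n) r).
Proof.
  intros hn l r H. unfold x_rels in H. apply in_map_iff in H.
  destruct H as [j [Heq Hin]]. apply in_seq in Hin. injection Heq as <- <-.
  set (i := n + 1 - j).
  assert (Hmem : In ([gen 1; gen n; gen i], [gen (i + 1); gen n]) (rho_rels n)).
  { unfold rho_rels. apply in_map_iff. exists i. split; [reflexivity|].
    apply in_seq. unfold i. lia. }
  assert (Hp1 : subst (psi_gen n) [gen 1] = [gen 1]) by reflexivity.
  assert (A : geq (rho_rels n) (subst (psi_gen n) (cyc_word n 1)) [gen 1; gen n]).
  { rewrite cyc_split by lia. replace (n - 1 + 1) with (S (n - 1)) by lia.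
    change (map gen (seq 1 (S (n - 1)))) with ([gen 1] ++ map gen (seq 2 (n - 1))).
    change (map gen (seq 1 1)) with [gen 1].
    rewrite !subst_app, Hp1, <- app_assoc.
    apply geq_trans with ([gen 1] ++ [gen (n + 2 - 2); gen_inv (n + 2 - 2 - (n - 1))] ++ [gen 1]).
    apply geq_app_l. apply geq_app_r. apply (L n _ (n - 1) 2); lia.
    replace (n + 2 - 2) with n by lia. replace (n - (n - 1)) with 1 by lia.
    exact (geq_free _ [gen 1; gen n] [] (gen_inv 1)). }
  assert (B : geq (rho_rels n) (subst (psi_gen n) (cyc_word n j))
                [gen (i + 1); gen_inv 1; gen 1; gen n; gen_inv i]).
  { rewrite cyc_split by lia. replace j with (S (j - 1)) at 3 by lia.
    change (map gen (seq 1 (S (j - 1)))) with ([gen 1] ++ map gen (seq 2 (j - 1))).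
    rewrite !subst_app, Hp1.
    change [gen (i + 1); gen_inv 1; gen 1; gen n; gen_inv i]
      with ([gen (i + 1); gen_inv 1] ++ [gen 1] ++ [gen n; gen_inv i]).
    apply geq_app2; [|apply geq_app_l].
    - pose proof (L n (rho_rels n) (n - j + 1) j ltac:(lia) ltac:(lia)) as HL.
      replace (n + 2 - j - (n - j + 1)) with 1 in HL by lia.
      replace (n + 2 - j) with (i + 1) in HL by (unfold i; lia). exact HL.
    - pose proof (L n (rho_rels n) (j - 1) 2 ltac:(lia) ltac:(lia)) as HL.
      replace (n + 2 - 2 - (j - 1)) with i in HL by (unfold i; lia).
      replace (n + 2 - 2) with n in HL by lia. exact HL. }
  eapply geq_trans. exact A. eapply geq_trans. 2: apply geq_sym; exact B.
  eapply geq_trans. apply geq_sym. exact (geq_free _ [gen 1; gen n] [] (gen i)).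
  eapply geq_trans. exact (geq_rel _ [] [gen_inv i] _ _ Hmem).
  apply geq_sym. exact (geq_free _ [gen (i + 1)] [gen n; gen_inv i] (gen_inv 1)).
Qed.

Theorem proposition4p18 (n : nat) (hn : 1 <= n) :
  (forall u v, valid n u -> valid n v -> geq (rho_rels n) u v ->
     geq (x_rels n) (subst (phi_gen n) u) (subst (phi_gen n) v)) /\
  (forall u v, valid n u -> valid n v -> geq (x_rels n) u v ->
     geq (rho_rels n) (subst (psi_gen n) u) (subst (psi_gen n) v)) /\
  (forall w, valid n w -> geq (rho_rels n) (subst (psi_gen n) (subst (phi_gen n) w)) w) /\
  (forall w, valid n w -> geq (x_rels n) (subst (phi_gen n) (subst (psi_gen n) w)) w).
Proof.
  split; [|split; [|split]].
  - intros u v _ _. apply hom. apply rel1; exact hn.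
  - intros u v _ _. apply hom. apply rel2; exact hn.
  - apply comp_id. apply conj3; exact hn.
  - apply comp_id. apply conj4; exact hn.
Qed.
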